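(* Let $a\in[0,\infty)$ and let $\theta:[0,1]\to[0,\infty]$ and $\vartheta:[0,\infty]\to[0,1]$ be continuous and decreasing functions such that $O_{\theta,\vartheta}(x,y)=\vartheta(\theta(x)+\theta(y))$ defines an overlap function $O_{\theta,\vartheta}:[0,1]^2\to[0,1]$, and suppose that at least one of the following holds: (1) $\theta(x)=\frac{a}{2}$ if and only if $x=1$; (2) $\vartheta(x)=1$ if and only if $x\in[0,a]$. Then there exist a pseudo automorphism $\mathcal{F}$ and a t-subnorm $T_{sub}$ such that $O_{\theta,\vartheta}(x,y)=\mathcal{F}(T_{sub}(x,y))$ for all $x,y\in[0,1]$.
   Context: ''Decreasing'' means non-increasing and ''increasing'' means non-decreasing. Arithmetic in $[0,\infty]$ uses $c+\infty=\infty$; continuity on $[0,\infty]$ refers to the usual topology of the extended half-line. An overlap function is a map $O:[0,1]^2\to[0,1]$ that is (O1) commutative, (O2) $O(x,y)=0$ iff $xy=0$, (O3) $O(x,y)=1$ iff $xy=1$, (O4) increasing in each variable, (O5) continuous. A pseudo automorphism is a continuous increasing map $\mathcal{F}:[0,1]\to[0,1]$ with $\mathcal{F}(x)=1$ iff $x=1$ and $\mathcal{F}(x)=0$ iff $x=0$. A t-subnorm is a commutative, associative map $T:[0,1]^2\to[0,1]$, increasing in each variable, with $T(x,y)\le\min\{x,y\}$ for all $x,y$. *)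

(* Defs.v *)
From HB Require Import structures.
From mathcomp Require Import all_boot all_order all_algebra.
From mathcomp Require Import all_classical all_reals all_analysis.
Set Implicit Arguments. Unset Strict Implicit. Unset Printing Implicit Defensive.
Import Order.TTheory GRing.Theory Num.Theory.
Import numFieldNormedType.Exports.
Local Open Scope classical_set_scope.
Local Open Scope ring_scope.

Definition unitI (R : realType) : set R := [set x : R | 0 <= x <= 1].
Definition nonnegE (R : realType) : set (\bar R) := [set x : \bar R | (0 <= x)%E].

Definition is_overlap (R : realType) (O : R -> R -> R) : Prop :=
  (forall x y, unitI x -> unitI y -> unitI (O x y)) /\
  (forall x y, unitI x -> unitI y -> O x y = O y x) /\
  (forall x y, unitI x -> unitI y -> (O x y = 0 <-> x * y = 0)) /\
  (forall x y, unitI x -> unitI y -> (O x y = 1 <-> x * y = 1)) /\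
  (forall x x' y, unitI x -> unitI x' -> unitI y -> x <= x' -> O x y <= O x' y) /\
  (forall x y y', unitI x -> unitI y -> unitI y' -> y <= y' -> O x y <= O x y') /\
  {within [set p : R * R | unitI p.1 /\ unitI p.2], continuous (fun p : R * R => O p.1 p.2)}.

Definition pseudo_automorphism (R : realType) (F : R -> R) : Prop :=
  (forall x, unitI x -> unitI (F x)) /\
  {within unitI (R:=R), continuous F} /\
  (forall x y, unitI x -> unitI y -> x <= y -> F x <= F y) /\
  (forall x, unitI x -> (F x = 1 <-> x = 1)) /\
  (forall x, unitI x -> (F x = 0 <-> x = 0)).

Definition t_subnorm (R : realType) (T : R -> R -> R) : Prop :=
  (forall x y, unitI x -> unitI y -> unitI (T x y)) /\
  (forall x y, unitI x -> unitI y -> T x y = T y x) /\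
  (forall x y z, unitI x -> unitI y -> unitI z -> T x (T y z) = T (T x y) z) /\
  (forall x x' y, unitI x -> unitI x' -> unitI y -> x <= x' -> T x y <= T x' y) /\
  (forall x y y', unitI x -> unitI y -> unitI y' -> y <= y' -> T x y <= T x y') /\
  (forall x y, unitI x -> unitI y -> T x y <= Num.min x y).

(* Main.v *)
From HB Require Import structures.
From mathcomp Require Import all_boot all_order all_algebra.
From mathcomp Require Import all_classical all_reals all_analysis.
From mathcomp Require Import lra.
Require Import Defs.
Set Implicit Arguments. Unset Strict Implicit. Unset Printing Implicit Defensive.
Import Order.TTheory GRing.Theory Num.Theory.
Import numFieldNormedType.Exports.
Local Open Scope classical_set_scope.
Local Open Scope ring_scope.
Definition Sset (R : realType) (th : R -> \bar R) (c : R) (M : \bar R) : set R :=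
  [set w | unitI w /\ (th w + c%:E <= M)%E].

Lemma cont_near (R : realType) (th : R -> \bar R) (g : R) (P : \bar R -> Prop) :
  {within unitI (R:=R), continuous th} -> unitI g -> nbhs (th g) P ->
  exists2 e : R, 0 < e & forall w, `|g - w| < e -> unitI w -> P (th w).
Proof.
move=> /subspace_continuousP cth ug nP.
have := cth g ug P nP.
move=> /= /nbhs_ballP [e e0 He]; exists e => //.


Qed.

Lemma key (R : realType) (th : R -> \bar R) (c : R) (M : \bar R) :
  {within unitI (R:=R), continuous th} ->
  (forall x, unitI x -> (0 <= th x)%E) ->
  (forall x y, unitI x -> unitI y -> x <= y -> (th y <= th x)%E) ->
  (th 1%R + c%:E <= M)%E ->
  unitI (inf (Sset th c M)) /\ (th (inf (Sset th c M)) + c%:E <= M)%E /\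
  (0 < inf (Sset th c M) -> (M <= th (inf (Sset th c M)) + c%:E)%E).
Proof.
move=> cth th0 thd h1.
set S := Sset th c M; set g := inf S.
have u1 : unitI (1 : R) by rewrite /unitI /= ler01 lexx.
have S1 : S 1 by split.
have neS : S !=set0 by exists 1.
have lbS : has_lbound S by exists 0 => w [/andP []].
have hinf : has_inf S by [].
have g0 : 0 <= g by apply: lb_le_inf => // w [/andP []].
have g1 : g <= 1 by apply: ge_inf.
have ug : unitI g by rewrite /unitI /= g0 g1.
have ltg : forall w, S w -> g <= w by move=> w Sw; apply: ge_inf.
split => //; split.
  rewrite leNgt; apply/negP => Mlt.
  case EM : M h1 Mlt => [m| |] h1 Mlt.
  - have thg : ((m - c)%R%:E < th g)%E.
      move: Mlt (th0 g ug); case: (th g) => [t| |] //= + _.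
        by rewrite -EFinD !lte_fin; lra.
      by move=> _; rewrite ltry.
    have [e e0 He] := cont_near (P := fun u => ((m - c)%R%:E < u)%E) cth ug
        (open_ereal_gt' thg).
    have [w Sw wlt] := inf_adherent e0 hinf.
    have gw := ltg w Sw.
    have := He w; case: Sw => uw; rewrite EM.
    have -> : `|g - w| < e by rewrite ler0_norm ?subr_le0 //; rewrite /g in wlt *; lra.
    move=> /[swap] /(_ isT uw).
    move: (th0 w uw); case: (th w) => [t| |] //= _.
    by rewrite -EFinD !lte_fin lee_fin; lra.
  - by move: Mlt; rewrite ltNge leey.
  - by move: h1; have := th0 1 u1; case: (th 1).
move=> gpos; rewrite leNgt; apply/negP => Mlt.
have [L [thL HL]] : exists L, (th g < L)%E /\ forall u, (u < L)%E -> (u + c%:E <= M)%E.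
  case EM : M Mlt => [m| |] Mlt.
  - exists (m - c)%R%:E; split.
      move: Mlt (th0 g ug); case: (th g) => [t| |] //= + _.
      by rewrite -EFinD !lte_fin; lra.
    move=> [t| |] //=.
      by rewrite -EFinD lte_fin lee_fin; lra.
    by move=> _; rewrite leNye.
  - move: Mlt; case Et : (th g) => [t| |] // _.
      exists (t + 1)%R%:E; split; first by rewrite lte_fin; lra.
      by move=> u _; rewrite leey.
    by move: (th0 g ug); rewrite Et.
  - by move: Mlt; rewrite ltNge leNye.
have [e e0 He] := cont_near (P := fun u => (u < L)%E) cth ug (open_ereal_lt' thL).
pose w := g - Num.min g e / 2.
have mg : 0 < Num.min g e by rewrite lt_min gpos e0.
have mle : Num.min g e <= g by rewrite ge_min lexx.
have mle2 : Num.min g e <= e by rewrite ge_min lexx orbT.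
have uw : unitI w by rewrite /unitI /= /w; apply/andP; split; lra.
have Sw : S w.
  split => //; apply: HL; apply: He => //.
  rewrite /w opprB addrC subrK ger0_norm; lra.
have := ltg w Sw; rewrite /w; lra.
Qed.

Lemma contF (R : realType) (O : R -> R -> R) :
  {within [set p : R * R | unitI p.1 /\ unitI p.2], continuous (fun p : R * R => O p.1 p.2)} ->
  {within unitI (R:=R), continuous (fun z => O z 1)}.
Proof.
move=> /subspace_continuousP cO; apply/subspace_continuousP => x ux.
have u1 : unitI (1 : R) by rewrite /unitI /= ler01 lexx.
have hp : (fun z => (z, (1:R))) @ within (unitI (R:=R)) (nbhs x) -->
    within [set p : R * R | unitI p.1 /\ unitI p.2] (nbhs ((x, 1) : R * R)).
  move=> P /= hP.
  have hc : (fun z => (z, (1:R))) @ within (unitI (R:=R)) (nbhs x) --> ((x, 1) : R * R).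
    exact: (@cvg_pair _ _ _ _ (nbhs x) (nbhs (1:R)) _ _ _ (fun z => z) (fun _ => 1) (@cvg_within _ (nbhs x) _ _) (cvg_cst _)).
  have h : within (unitI (R:=R)) (nbhs x)
     (fun z => [set p : R * R | unitI p.1 /\ unitI p.2] (z, 1) -> P (z, 1)) := hc _ hP.
  have := @filterS2 _ _ _ _ _ [set z | P (z, 1)] (fun z (H : _ -> P (z,1)) (uz : unitI z) => H (conj uz u1)) h (@withinT _ (nbhs x) (unitI (R:=R)) _).
  by move=> H; apply: H; apply: filter_class.
have := cvg_comp _ _ hp (cO (x, 1) (conj ux u1)).
by [].
Qed.

Theorem proposition5p1 (R : realType) (a : R) (theta : R -> \bar R)
  (vtheta : \bar R -> R) :
  0 <= a ->
  (forall x, unitI x -> (0 <= theta x)%E) ->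
  (forall u, nonnegE u -> unitI (vtheta u)) ->
  {within unitI (R:=R), continuous theta} ->
  {within nonnegE (R:=R), continuous vtheta} ->
  (forall x y, unitI x -> unitI y -> x <= y -> (theta y <= theta x)%E) ->
  (forall u v, nonnegE u -> nonnegE v -> (u <= v)%E -> vtheta v <= vtheta u) ->
  is_overlap (fun x y => vtheta (theta x + theta y)%E) ->
  ((forall x, unitI x -> (theta x = (a / 2)%:E <-> x = 1)) \/
   (forall u, nonnegE u -> (vtheta u = 1 <-> (u <= a%:E)%E))) ->
  exists (F : R -> R) (T : R -> R -> R),
    pseudo_automorphism F /\ t_subnorm T /\
    forall x y, unitI x -> unitI y ->
      vtheta (theta x + theta y)%E = F (T x y).
Proof.
move=> _ th0 vt01 cth _ thd vtd [Q1 [Q2 [Q3 [Q4 [Q5 [Q6 Q7]]]]]] _.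
have u0 : unitI (0 : R) by rewrite /unitI /= lexx ler01.
have u1 : unitI (1 : R) by rewrite /unitI /= ler01 lexx.
have vt0 : vtheta (theta 0%R + theta 1%R)%E = 0 by apply/(Q3 0 1 u0 u1); rewrite mul0r.
have vt1 : vtheta (theta 1%R + theta 1%R)%E = 1 by apply/(Q4 1 1 u1 u1); rewrite mulr1.
case E1 : (theta 1%R) vt0 vt1 (th0 1 u1) => [c| |] vt0 vt1 c0 //; last first.
  exfalso; move: vt0 vt1.
  rewrite addey; last by have := th0 0 u0; case: (theta 0).
  by move=> -> /eqP; rewrite eq_sym oner_eq0.
have cle : forall z, unitI z -> (c%:E <= theta z)%E.
  by move=> z uz; rewrite -E1; apply: thd => //; case/andP: uz.
have hM : forall x y, unitI x -> unitI y -> (theta 1%R + c%:E <= theta x + theta y)%E.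
  by move=> x y ux uy; rewrite E1; apply: leeD; apply: cle.
pose G M := inf (Sset theta c M).
have L : forall M z w, (theta 1%R + c%:E <= M)%E -> unitI z -> unitI w ->
    (theta w + c%:E <= theta (G M) + theta z)%E <-> (theta w + c%:E + c%:E <= M + theta z)%E.
  move=> M z w hM1 uz uw.
  have [ug [h1 h2]] := key cth th0 thd hM1.
  rewrite -/(G M) in ug h1 h2.
  have : 0 < G M \/ G M = 0.
    by case/andP: ug; rewrite le_eqVlt => /orP [/eqP ->|->] _; [right|left].
  case => [gpos|g0].
    have eM : M = (theta (G M) + c%:E)%E by apply/le_anti; rewrite h1 h2.
    rewrite {2}eM.
    by rewrite (addeAC (theta (G M))) leeD2rE.
  rewrite g0 in h1 *; split => _.
    apply: (le_trans _ (leeD2r (theta z) h1)).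
    by apply: leeD; [apply: leeD2r; apply: thd => //; case/andP: uw | apply: cle].
  by apply: leeD; [apply: thd => //; case/andP: uw | apply: cle].
have SE : forall M z, (theta 1%R + c%:E <= M)%E -> unitI z ->
    Sset theta c (theta (G M) + theta z)%E =
    [set w | unitI w /\ (theta w + c%:E + c%:E <= M + theta z)%E].
  move=> M z hM1 uz; apply/seteqP; split => w [uw hw]; split => //.
    by apply/(L M z w hM1 uz uw).
  by apply/(L M z w hM1 uz uw).
have GM : forall M M', (theta 1%R + c%:E <= M')%E -> (M' <= M)%E -> G M <= G M'.
  move=> M M' h1 h2; apply: lb_le_inf; first by exists 1; split.
  move=> w [uw hw]; apply: ge_inf; first by exists 0 => v [/andP []].
  by split => //; apply: le_trans h2.
have GU : forall M, (theta 1%R + c%:E <= M)%E -> unitI (G M).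
  by move=> M hM1; have [] := key cth th0 thd hM1.
exists (fun z => vtheta (theta z + c%:E)%E), (fun x y => G (theta x + theta y)%E).
split; last split.
- split.
    by move=> x ux; rewrite -E1; apply: Q1.
  split.
    by have := @contF R (fun x y => vtheta (theta x + theta y)%E) Q7; rewrite /= E1.
  split.
    by move=> x y ux uy xy; rewrite -E1; apply: Q5.
  split.
    by move=> x ux; rewrite -E1 (Q4 x 1 ux u1) mulr1.
  by move=> x ux; rewrite -E1 (Q3 x 1 ux u1) mulr1.
- split.
    by move=> x y ux uy; apply: GU; apply: hM.
  split.
    by move=> x y ux uy; rewrite addeC.
  split.
    move=> x y z ux uy uz /=.
    change (inf (Sset theta c (theta x + theta (G (theta y + theta z)))%E) = inf (Sset theta c (theta (G (theta x + theta y)) + theta z)%E)).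
    rewrite [(theta x + _)%E]addeC SE ?hM // SE ?hM //.
    by rewrite addeC addeA.
  split.
    move=> x x' y ux ux' uy xx'; apply: GM; first exact: hM.
    by apply: leeD2r; apply: thd.
  split.
    move=> x y y' ux uy uy' yy'; apply: GM; first exact: hM.
    by apply: leeD2l; apply: thd.
  move=> x y ux uy; rewrite le_min; apply/andP; split; apply: ge_inf;
    try (by exists 0 => v [/andP []]).
    split => //; apply: leeD2l; exact: cle.
  split => //; rewrite [X in (_ <= X)%E]addeC; apply: leeD2l; exact: cle.
move=> x y ux uy.
have hM1 := hM x y ux uy.
have [ug [h1 h2]] := key cth th0 thd hM1.
rewrite -/(G _) in ug h1 h2.
have : 0 < G (theta x + theta y)%E \/ G (theta x + theta y)%E = 0.
  by case/andP: ug; rewrite le_eqVlt => /orP [/eqP ->|->] _; [right|left].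
case => [gpos|g0].
  by congr vtheta; apply/le_anti; rewrite h1 h2.
rewrite g0 in h1 *; rewrite vt0.
have nn : forall u v : \bar R, (0 <= u)%E -> (0 <= v)%E -> nonnegE (u + v)%E.
  by move=> u v hu hv; rewrite /nonnegE /=; apply: adde_ge0.
apply/le_anti/andP; split.
  rewrite -vt0; apply: vtd => //; apply: nn => //; apply: th0 => //.
by have /andP [] := vt01 _ (nn (theta x) (theta y) (th0 x ux) (th0 y uy)).
Qed.
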